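(* Let $E$ be a finite set and let $\mathcal{W}\subseteq\{+,-,0\}^E$ satisfy (A1), (A2), (A3). Let $U,U'\in\mathrm{asym}(\mathcal{W})$ with $\underline{U}=\underline{U'}$ and $I(U,-U')\cap\mathcal{W}=I(-U,U')\cap\mathcal{W}=\emptyset$, and let $P=U+(-U')$ (so $P\in\mathcal{P}(\mathcal{W})$). Then every $Z\in\mathcal{W}$ with $\underline{Z}\subseteq\underline{U}$ satisfies $Z_f=U_f$ for all $f\in\underline{U}\setminus\underline{P}$.
   Context: For $X\in\{+,-,0\}^E$: $X^+=\{e:X_e=+\}$, $X^-=\{e:X_e=-\}$, support $\underline{X}=X^+\cup X^-$; $(-X)_e=-X_e$; composition $(X\circ Y)_e=X_e$ if $X_e\neq0$, else $Y_e$; $S(X,Y)=(X^+\cap Y^-)\cup(X^-\cap Y^+)$. For sets, $\mathcal{A}\circ\mathcal{B}=\{A\circ B: A\in\mathcal{A}, B\in\mathcal{B}\}$. For $X,Y$ with $\underline{X}=\underline{Y}$, $X\neq Y$, $e\in S(X,Y)$: $I_e(X,Y)=\{V : \underline{V}\subseteq\underline{X}\setminus\{e\}, V_f=X_f\ \forall f\notin S(X,Y)\}$, $I(X,Y)=\bigcup_{e\in S(X,Y)}I_e(X,Y)$. Sum: $(X+Y)_e=0$ if $e\in S(X,Y)$, else $(X\circ Y)_e$. $\mathrm{sym}(\mathcal{W})=\{V: V,-V\in\mathcal{W}\}$, $\mathrm{asym}(\mathcal{W})=\{V\in\mathcal{W}: -V\notin\mathcal{W}\}$, $\mathcal{P}(\mathcal{W})=\{X+(-Y):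 X,Y\in\mathrm{asym}(\mathcal{W}), \underline{X}=\underline{Y}, I(X,-Y)\cap\mathcal{W}=I(-X,Y)\cap\mathcal{W}=\emptyset\}$. Axioms: (A1) $X,Y\in\mathcal{W}\Rightarrow X\circ Y\in\mathcal{W}$ and $X\circ(-Y)\in\mathcal{W}$; (A2) if $X,Y\in\mathcal{W}$ with $\underline{X}=\underline{Y}$ then $I_e(X,Y)\cap\mathcal{W}\neq\emptyset$ for every $e\in S(X,Y)$; (A3) $\mathcal{P}(\mathcal{W})\circ\mathcal{W}\subseteq\mathcal{W}$. *)

(* Defs.v *)
From mathcomp Require Import all_boot.
Set Implicit Arguments. Unset Strict Implicit. Unset Printing Implicit Defensive.

(* Signs: None = 0, Some true = +, Some false = -. *)
Definition sign := option bool.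
Definition sgP : sign := Some true.
Definition sgN : sign := Some false.
Definition sg0 : sign := None.

Section SignVectors.
Variable E : finType.
Definition svec := {ffun E -> sign}.

Definition plus_part (X : svec) : {set E} := [set e | X e == sgP].
Definition minus_part (X : svec) : {set E} := [set e | X e == sgN].
Definition supp (X : svec) : {set E} := [set e | X e != sg0].

Definition sopp (s : sign) : sign := omap negb s.
Definition vopp (X : svec) : svec := [ffun e => sopp (X e)].

Definition comp (X Y : svec) : svec :=
  [ffun e => if X e != sg0 then X e else Y e].

Definition sep (X Y : svec) : {set E} :=
  (plus_part X :&: minus_part Y) :|: (minus_part X :&: plus_part Y).

Definition vsum (X Y : svec) : svec :=
  [ffun e => if e \in sep X Y then sg0 else comp X Y e].

Definition Ie (X Y : svec) (e : E) : {set svec} :=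
  [set V : svec | (supp V \subset supp X :\ e) &&
                  [forall f, (f \notin sep X Y) ==> (V f == X f)]].

Definition Iset (X Y : svec) : {set svec} :=
  \bigcup_(e in sep X Y) Ie X Y e.

Definition sym (W : {set svec}) : {set svec} :=
  [set V | (V \in W) && (vopp V \in W)].
Definition asym (W : {set svec}) : {set svec} :=
  [set V in W | vopp V \notin W].

Definition Pset (W : {set svec}) : {set svec} :=
  [set Q | [exists X in asym W, exists Y in asym W,
     [&& supp X == supp Y,
         Iset X (vopp Y) :&: W == set0,
         Iset (vopp X) Y :&: W == set0 &
         Q == vsum X (vopp Y)]]].

Definition A1 (W : {set svec}) : Prop :=
  forall X Y, X \in W -> Y \in W -> comp X Y \in W /\ comp X (vopp Y) \in W.

Definition A2 (W : {set svec}) : Prop :=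
  forall X Y, X \in W -> Y \in W -> supp X = supp Y ->
    forall e, e \in sep X Y -> Ie X Y e :&: W != set0.

Definition A3 (W : {set svec}) : Prop :=
  forall P Z, P \in Pset W -> Z \in W -> comp P Z \in W.

End SignVectors.

(* Main.v *)
Require Import Defs.
From mathcomp Require Import all_boot.
Set Implicit Arguments. Unset Strict Implicit. Unset Printing Implicit Defensive.

Definition sepb (a b : sign) : bool :=
  match a, b with Some x, Some y => x != y | _, _ => false end.

Section H.
Variable E : finType.
Implicit Types X Y : svec E.

Lemma in_sep X Y e : (e \in sep X Y) = sepb (X e) (Y e).
Proof. rewrite !inE; case: (X e) => [[]|]; case: (Y e) => [[]|] //. Qed.

Lemma in_supp X e : (e \in supp X) = (X e != None).
Proof. by rewrite inE. Qed.

Lemma compE X Y e : Defs.comp X Y e = if X e != None then X e else Y e.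
Proof. by rewrite ffunE. Qed.

Lemma voppE X e : vopp X e = sopp (X e).
Proof. by rewrite ffunE. Qed.

Lemma vsumE X Y e : vsum X Y e =
  if sepb (X e) (Y e) then None else (if X e != None then X e else Y e).
Proof. by rewrite ffunE in_sep compE. Qed.
End H.

Theorem lemma2p4 (E : finType) (W : {set svec E}) :
  A1 W -> A2 W -> A3 W ->
  forall U U' : svec E,
    U \in asym W -> U' \in asym W -> supp U = supp U' ->
    Iset U (vopp U') :&: W = set0 -> Iset (vopp U) U' :&: W = set0 ->
    forall Z : svec E, Z \in W -> supp Z \subset supp U ->
      forall f, f \in supp U :\: supp (vsum U (vopp U')) -> Z f = U f.
Proof.
move=> hA1 hA2 hA3 U U' HU HU' Hs Hi1 Hi2 Z HZ HZs f Hf.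
have HUW : U \in W by move: HU; rewrite inE => /andP[].
have hs e : (U e == None) = (U' e == None).
  move/setP: Hs => /(_ e); rewrite !in_supp => h.
  by apply: negb_inj; rewrite h.
have hz e : U e = None -> Z e = None.
  move=> h; have := subsetP HZs e; rewrite !in_supp h /=.
  by case: (Z e) => // a /(_ isT).
set P := vsum U (vopp U').
have HP : P \in Pset W.
  rewrite inE; apply/existsP; exists U; rewrite HU /=; apply/existsP; exists U'.
  by rewrite HU' Hs Hi1 Hi2 !eqxx.
have HY := hA3 _ _ HP HZ.
set Y := Defs.comp P Z in HY.
have HfS : f \in sep U (vopp U').
  move: Hf; rewrite in_setD !in_supp /P vsumE in_sep voppE.
  by case: sepb => //=; case: (U f) => [a|] //=; rewrite andbF.
have HPf : P f = None by rewrite /P vsumE -in_sep HfS.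
have HYf : Y f = Z f by rewrite /Y compE HPf.
have key g : g \notin sep U (vopp U') -> Y g = U g.
  rewrite /Y compE /P vsumE in_sep voppE.
  move: (hs g) (hz g); case: (U g) => [a|]; case: (U' g) => [b|] //=;
   [ by case: a; case: b | by move=> _ ->].
case: (Z f =P U f) => // hne; exfalso.
case hZf: (Z f) => [c|].
- (* Z f = -U f *)
  have HX := (hA1 _ _ HY HUW).1.
  set X := Defs.comp Y U in HX.
  have hYU e : Y e != None -> U e != None.
    rewrite /Y compE /P vsumE voppE.
    move: (hs e) (hz e); case: (U e) => [a|]; case: (U' e) => [b|] //=.
    by move=> _ ->.
  have hXs : supp X = supp U.
    apply/setP => e; rewrite !in_supp /X compE.
    by case: (Y e =P None) => [->|/eqP h] //=; rewrite h (hYU _ h).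
  have hXf : f \in sep X U.
    move: HfS hne; rewrite !in_sep /X compE HYf hZf voppE /=.
    by case: (U f) => [[]|]; case: (U' f) => [[]|]; case: c {hZf}.
  have := hA2 _ _ HX HUW hXs f hXf.
  case/set0Pn => V; rewrite inE => /andP[HV HVW].
  move: HV; rewrite inE => /andP[Vs /forallP Vg].
  have : V \in Iset U (vopp U') :&: W.
    rewrite inE HVW andbT; apply/bigcupP; exists f => //.
    rewrite inE; apply/andP; split; first by rewrite -hXs.
    apply/forallP => g; apply/implyP => gS.
    have XgU : X g = U g by rewrite /X compE key //; case: (U g).
    rewrite -XgU; apply/eqP; move/implyP: (Vg g) => h; apply/eqP; apply: h.
    by rewrite in_sep XgU; case: (U g) => [[]|].
  by rewrite Hi1 inE.
- have : Y \in Iset U (vopp U') :&: W.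
    rewrite inE HY andbT; apply/bigcupP; exists f => //.
    rewrite inE; apply/andP; split.
    + apply/subsetP => e; rewrite in_setD1 !in_supp.
      case: (e =P f) => [->|/eqP ne]; first by rewrite HYf hZf eqxx.
      rewrite /Y compE /P vsumE voppE.
      move: (hs e) (hz e); case: (U e) => [a|]; case: (U' e) => [b|] //=.
      by move=> _ ->.
    + by apply/forallP => g; apply/implyP => /key ->.
  by rewrite Hi1 inE.
Qed.
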